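(* Let $r\in(0,1]$ and let $(\psi(k))_{k\in\mathbb{N}}$ be a positive nonincreasing sequence for which there exists $\varepsilon>0$ such that the sequence $k^{r+\varepsilon}\psi(k)$ is almost decreasing. Then there is a constant $K$, depending on $\psi$ and $r$, such that for all $n\in\mathbb{N}$ $$\psi(n)\,n^{r}\le\sum_{k=n}^{\infty}\Delta\psi(k)\,k^{r}\le K\,\psi(n)\,n^{r}.$$
   Context: $\Delta\psi(k)=\psi(k)-\psi(k+1)$. A sequence $(a_k)$ is almost decreasing if there is a constant $K_1>0$ such that $a_{k_1}\le K_1 a_{k_2}$ for all $k_1>k_2\ge1$. *)

(* Defs.v *)
From Stdlib Require Import Reals.
From Coquelicot Require Import Coquelicot.
Open Scope R_scope.

Definition Dpsi (psi : nat -> R) (k : nat) : R := psi k - psi (S k).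

Definition almost_decreasing (a : nat -> R) : Prop :=
  exists K1 : R, 0 < K1 /\
    forall k1 k2 : nat, (1 <= k2)%nat -> (k2 < k1)%nat -> a k1 <= K1 * a k2.

(* Main.v *)
Require Import Defs.
From Stdlib Require Import Reals Lra Lia.
From Coquelicot Require Import Coquelicot.
Open Scope R_scope.

Lemma key_ineq (x y r eps : R) : 0 < y <= x -> 0 < r <= 1 -> 0 < eps ->
  (Rpower x r - Rpower y r) * Rpower x (-(r+eps))
    <= / eps * (Rpower y (-eps) - Rpower x (-eps)).
Proof.
  intros [y0 yx] [r0 r1] e0. unfold Rpower.
  assert (hb : ln y <= ln x).
  { destruct (Req_dec y x) as [->|ne]; [lra|]. left; apply ln_increasing; lra. }
  set (a := ln x) in *. set (b := ln y) in *. set (d := a - b).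
  set (E := exp (-eps * a)).
  assert (E0 : 0 < E) by apply exp_pos.
  assert (h1 : exp (r * a) * exp (- (r + eps) * a) = E).
  { unfold E; rewrite <- exp_plus; f_equal; ring. }
  assert (h2 : exp (r * b) * exp (- (r + eps) * a) = E * exp (-(r*d))).
  { unfold E, d; rewrite <- !exp_plus; f_equal; ring. }
  assert (h3 : exp (-eps * b) = E * exp (eps * d)).
  { unfold E, d; rewrite <- !exp_plus; f_equal; ring. }
  rewrite Rmult_minus_distr_r, h1, h2, h3. fold E.
  assert (d0 : 0 <= d) by (unfold d; lra).
  pose proof (exp_ineq1_le (-(r*d))) as u.
  pose proof (exp_ineq1_le (eps*d)) as v.
  assert (hu : 1 - exp (-(r*d)) <= d) by nra.
  assert (hv : d <= / eps * (exp (eps * d) - 1)).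
  { apply (Rmult_le_reg_l eps); [lra|]. rewrite <- Rmult_assoc, Rinv_r by lra. lra. }
  apply Rle_trans with (E * d).
  - replace (E - E * exp (- (r * d))) with (E * (1 - exp (-(r*d)))) by ring.
    apply Rmult_le_compat_l; lra.
  - replace (/ eps * (E * exp (eps * d) - E)) with (E * (/ eps * (exp (eps * d) - 1))) by ring.
    apply Rmult_le_compat_l; lra.
Qed.

Lemma Rpower_pos' x y : 0 < Rpower x y.
Proof. unfold Rpower; apply exp_pos. Qed.

Lemma Rpower_inv_mul x s : 0 < x -> Rpower x s * Rpower x (-s) = 1.
Proof. intros. rewrite <- Rpower_plus. replace (s + - s) with 0 by ring. apply Rpower_O; auto. Qed.

Theorem lemma1 (r : R) (psi : nat -> R) :
  0 < r <= 1 ->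
  (forall k : nat, (1 <= k)%nat -> 0 < psi k) ->
  (forall k : nat, (1 <= k)%nat -> psi (S k) <= psi k) ->
  (exists eps : R, 0 < eps /\
     almost_decreasing (fun k => Rpower (INR k) (r + eps) * psi k)) ->
  exists K : R,
    forall n : nat, (1 <= n)%nat ->
      ex_series (fun j : nat => Dpsi psi (n + j) * Rpower (INR (n + j)) r) /\
      psi n * Rpower (INR n) r
        <= Series (fun j : nat => Dpsi psi (n + j) * Rpower (INR (n + j)) r) /\
      Series (fun j : nat => Dpsi psi (n + j) * Rpower (INR (n + j)) r)
        <= K * (psi n * Rpower (INR n) r).
Proof.
  intros [r0 r1] pos dec [eps [eps0 [K1 [K10 AD]]]]. simpl in AD.
  exists (1 + K1 / eps). intros n Hn.
  set (s := r + eps) in *.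
  set (a := fun j : nat => Dpsi psi (n + j) * Rpower (INR (n + j)) r).
  assert (INRpos : forall k, (1 <= k)%nat -> 0 < INR k).
  { intros k hk. apply lt_0_INR; lia. }
  assert (Dpos : forall k, (1 <= k)%nat -> 0 <= Dpsi psi k).
  { intros k hk. unfold Dpsi. pose proof (dec k hk); lra. }
  assert (apos : forall j, 0 <= a j).
  { intros j. unfold a. apply Rmult_le_pos; [apply Dpos; lia| left; apply Rpower_pos']. }
  assert (Xmono : forall k m, (k <= m)%nat -> (1 <= k)%nat -> Rpower (INR k) r <= Rpower (INR m) r).
  { intros k m km hk. apply Rle_Rpower_l; [lra|]. split; [apply INRpos; auto| apply le_INR; auto]. }
  set (A := K1 * (Rpower (INR n) s * psi n)).
  assert (A0 : 0 <= A).
  { unfold A. pose proof (pos n Hn). pose proof (Rpower_pos' (INR n) s).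
    apply Rmult_le_pos; [lra|]. apply Rmult_le_pos; lra. }
  assert (Pbound : forall m, (n < m)%nat -> Rpower (INR m) s * psi m <= A).
  { intros m hm. apply AD; lia. }
  assert (step : forall m, (n <= m)%nat ->
     psi (S m) * (Rpower (INR (S m)) r - Rpower (INR m) r)
       <= A / eps * (Rpower (INR m) (-eps) - Rpower (INR (S m)) (-eps))).
  { intros m hm.
    set (P := Rpower (INR (S m)) s * psi (S m)).
    assert (hP : psi (S m) = P * Rpower (INR (S m)) (- s)).
    { unfold P. rewrite Rmult_comm, <- Rmult_assoc, (Rmult_comm _ (Rpower _ s)).
      rewrite Rpower_inv_mul; [ring| apply INRpos; lia]. }
    rewrite hP.
    replace (P * Rpower (INR (S m)) (- s) * (Rpower (INR (S m)) r - Rpower (INR m) r))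
      with (((Rpower (INR (S m)) r - Rpower (INR m) r) * Rpower (INR (S m)) (- s)) * P) by ring.
    assert (hk := key_ineq (INR (S m)) (INR m) r eps).
    fold s in hk.
    assert (br : 0 <= (Rpower (INR (S m)) r - Rpower (INR m) r) * Rpower (INR (S m)) (- s)).
    { apply Rmult_le_pos; [| left; apply Rpower_pos'].
      pose proof (Xmono m (S m) ltac:(lia) ltac:(lia)); lra. }
    apply Rle_trans with (((Rpower (INR (S m)) r - Rpower (INR m) r) * Rpower (INR (S m)) (- s)) * A).
    - apply Rmult_le_compat_l; [exact br| apply Pbound; lia].
    - rewrite (Rmult_comm _ A). unfold Rdiv. rewrite Rmult_assoc. apply Rmult_le_compat_l; [exact A0|].
      apply hk; [| split; lra | lra].
      split; [apply INRpos; lia| apply le_INR; lia]. }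
  assert (upper : forall N, sum_n a N + psi (S (n + N)) * Rpower (INR (n + N)) r
     <= psi n * Rpower (INR n) r + A / eps * (Rpower (INR n) (-eps) - Rpower (INR (n + N)) (-eps))).
  { induction N.
    - rewrite sum_O. unfold a, Dpsi. rewrite Nat.add_0_r. lra.
    - rewrite sum_Sn. change (plus (sum_n a N) (a (S N))) with (sum_n a N + a (S N)).
      unfold a at 2, Dpsi.
      replace (n + S N)%nat with (S (n + N)) by lia.
      pose proof (step (n + N)%nat ltac:(lia)). lra. }
  assert (AY : A * Rpower (INR n) (-eps) = K1 * (psi n * Rpower (INR n) r)).
  { unfold A. replace (Rpower (INR n) r) with (Rpower (INR n) (s + - eps)) by (f_equal; unfold s; ring).
    rewrite Rpower_plus. ring. }
  assert (ub : forall N, sum_n a N <= (1 + K1 / eps) * (psi n * Rpower (INR n) r)).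
  { intros N. pose proof (upper N).
    assert (0 <= psi (S (n + N)) * Rpower (INR (n + N)) r).
    { apply Rmult_le_pos; [left; apply pos; lia| left; apply Rpower_pos']. }
    assert (0 <= A / eps * Rpower (INR (n + N)) (-eps)).
    { apply Rmult_le_pos; [apply Rmult_le_pos; [lra| left; apply Rinv_0_lt_compat; lra]| left; apply Rpower_pos']. }
    assert (A / eps * Rpower (INR n) (-eps) = K1 / eps * (psi n * Rpower (INR n) r)).
    { unfold Rdiv. rewrite Rmult_assoc, (Rmult_comm (/ eps)), <- Rmult_assoc, AY. ring. }
    lra. }
  assert (lower : forall N, Rpower (INR n) r * (psi n - psi (S (n + N))) <= sum_n a N).
  { induction N.
    - rewrite sum_O. unfold a, Dpsi. rewrite Nat.add_0_r. lra.
    - rewrite sum_Sn. change (plus (sum_n a N) (a (S N))) with (sum_n a N + a (S N)).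
      unfold a at 2.
      replace (n + S N)%nat with (S (n + N)) by lia.
      assert (Dpsi psi (S (n + N)) * Rpower (INR n) r <= Dpsi psi (S (n + N)) * Rpower (INR (S (n + N))) r).
      { apply Rmult_le_compat_l; [apply Dpos; lia| apply Xmono; lia]. }
      unfold Dpsi in *. lra. }
  assert (incr : forall N, sum_n a N <= sum_n a (S N)).
  { intros N. rewrite sum_Sn. change (plus (sum_n a N) (a (S N))) with (sum_n a N + a (S N)).
    pose proof (apos (S N)); lra. }
  destruct (ex_finite_lim_seq_incr (sum_n a) _ incr ub) as [l Hl].
  assert (Hs : is_series a l) by exact Hl.
  rewrite (is_series_unique a l Hs).
  split; [exists l; exact Hs|].
  pose proof (is_lim_seq_incr_compare _ _ Hl incr) as le_l.
  split.
  - apply Rnot_lt_le. intros Hlt.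
    set (Xn := Rpower (INR n) r).
    set (delta := psi n * Xn - l).
    assert (d0 : 0 < delta) by (unfold delta, Xn; lra).
    set (C := A * Xn).
    assert (C0 : 0 <= C) by (unfold C, Xn; pose proof (Rpower_pos' (INR n) r); nra).
    destruct (INR_unbounded (exp (C / delta / s))) as [M HM].
    set (m := S (n + M)).
    assert (INR M <= INR m) by (apply le_INR; unfold m; lia).
    assert (mpos : 0 < INR m) by (apply INRpos; unfold m; lia).
    assert (hln : C / delta / s < ln (INR m)).
    { rewrite <- (ln_exp (C / delta / s)). apply ln_increasing; [apply exp_pos| lra]. }
    set (E := Rpower (INR m) s).
    assert (hE : C / delta < E).
    { unfold E, Rpower. pose proof (exp_ineq1_le (s * ln (INR m))).
      assert (s0 : 0 < s) by (unfold s; lra).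
      assert (C / delta < s * ln (INR m)).
      { apply (Rmult_lt_reg_r (/ s)); [apply Rinv_0_lt_compat; lra|].
        replace (s * ln (INR m) * / s) with (ln (INR m)) by (field; lra). exact hln. }
      lra. }
    assert (hCE : C < delta * E).
    { apply (Rmult_lt_reg_r (/ delta)); [apply Rinv_0_lt_compat; lra|].
      replace (delta * E * / delta) with E by (field; lra). exact hE. }
    assert (hPm : E * psi m <= A) by (apply Pbound; unfold m; lia).
    assert (E0 : 0 < E) by apply Rpower_pos'.
    assert (Xn0 : 0 < Xn) by apply Rpower_pos'.
    assert (hm : psi m * Xn < delta).
    { apply (Rmult_lt_reg_r E); [exact E0|].
      apply Rle_lt_trans with C; [|lra].
      unfold C. replace (psi m * Xn * E) with ((E * psi m) * Xn) by ring.
      apply Rmult_le_compat_r; lra. }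
    pose proof (lower M) as LM. pose proof (le_l M).
    fold Xn in LM. unfold m in hm. unfold delta in *. nra.
  - change (Rbar_le l ((1 + K1 / eps) * (psi n * Rpower (INR n) r))).
    apply (is_lim_seq_le (sum_n a) (fun _ => (1 + K1 / eps) * (psi n * Rpower (INR n) r)) l _ ub Hl).
    apply is_lim_seq_const.
Qed.
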